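(* Let $M\ge 1$ be an integer and let $\rho_1>\rho_2>\dots>\rho_M>0$. Let $(a,b)\subset\mathbb R$ be a bounded interval. For $\varepsilon>0$ and $u\colon\varepsilon\mathbb Z\to\mathbb R$ with $u(x)=0$ for all $x\in\varepsilon\mathbb Z\setminus(a,b)$, write $u_k=u(\varepsilon k)$ and define $$ F_\varepsilon(u)=\sum_{k\in\mathbb Z}\varepsilon\,\biggl|\frac1\varepsilon\Bigl(\sum_{j=1}^M (u_{k+j}-u_k)\rho_j-\sum_{j=1}^M (u_{k-j+1}-u_k)\rho_j\Bigr)\biggr|^2 . $$ Then there exists a constant $\Lambda>0$, independent of $\varepsilon$ and $u$, such that $$ F_\varepsilon(u)\ \ge\ \Lambda\sum_{k\in\mathbb Z}\varepsilon\,\Bigl|\frac{u_{k+1}-u_k}{\varepsilon}\Bigr|^2 $$ for all such $u$ and all $0<\varepsilon<\frac{1}{2M}$.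
   Context: The quantity inside the absolute value equals the scaled discrete nonlocal gradient $\frac1\varepsilon\bigl(-\sum_{i=1}^M\rho_i u_{k+1-i}+\sum_{i=1}^M\rho_i u_{k+i}\bigr)$. Only finitely many terms of the sums are nonzero since $u$ vanishes outside $(a,b)$. *)

(* Defs.v *)
From HB Require Import structures.
From mathcomp Require Import all_boot all_order all_algebra.
From mathcomp Require Import all_classical all_reals.
Set Implicit Arguments. Unset Strict Implicit. Unset Printing Implicit Defensive.
Import Order.TTheory GRing.Theory Num.Theory.
Local Open Scope ring_scope.
Local Open Scope classical_set_scope.

Definition zsum (R : realType) (f : int -> R) : R := \sum_(k \in [set: int]) f k.

Definition Feps (R : realType) (M : nat) (rho : nat -> R) (eps : R)
  (u : int -> R) : R :=
  zsum (fun k : int =>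
    eps * (eps^-1 * (\sum_(1 <= j < M.+1) (u (k + j%:Z) - u k) * rho j
                    - \sum_(1 <= j < M.+1) (u (k - j%:Z + 1) - u k) * rho j)) ^+ 2).

Definition Deps (R : realType) (eps : R) (u : int -> R) : R :=
  zsum (fun k : int => eps * ((u (k + 1) - u k) / eps) ^+ 2).

(* Main.v *)
Require Import Defs.
From HB Require Import structures.
From mathcomp Require Import all_boot all_order all_algebra.
From mathcomp Require Import all_classical all_reals.
From mathcomp Require Import zify ring lra.
Import Order.TTheory GRing.Theory Num.Theory.
Local Open Scope ring_scope.
Set Implicit Arguments. Unset Strict Implicit.

Section Z.
Variable R : realType.
Implicit Types f g : int -> R.

Definition fs f := exists N : nat, forall k, f k != 0 -> (absz k < N)%N.

Lemma zsum_win f (lo : int) (L : nat) :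
  (forall k, f k != 0 -> (lo <= k)%R /\ (k < lo + L%:Z)%R) ->
  zsum f = \sum_(i < L) f (i%:Z + lo).
Proof.
move=> Hf; rewrite /zsum -(big_mkord xpredT (fun i : nat => f (i%:Z + lo))).
rewrite -(big_map (fun i : nat => i%:Z + lo) xpredT f).
have ur : uniq [seq (i%:Z + lo) | i <- index_iota 0 L].
  rewrite map_inj_uniq ?iota_uniq // => x y /addIr [] //.
rewrite (fsbig_seq _ _ ur); apply: esym.
apply: (fsbig_widen [set` _] [set: int] f) => // k [_ /=] kn.
apply/eqP; apply: contraT => /Hf [k1 k2]; exfalso; apply: kn.
apply/mapP; exists (absz (k - lo)%R); last by lia.
rewrite mem_index_iota; lia.
Qed.

Lemma fs_win f : fs f -> exists N : nat, forall N', (N <= N')%N ->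
  zsum f = \sum_(i < N'.*2) f (i%:Z - N'%:Z).
Proof.
move=> [N HN]; exists N => N' le; apply: zsum_win => k /HN; lia.
Qed.

Lemma fs0 : fs (fun _ => 0).
Proof. by exists 0%N => k; rewrite eqxx. Qed.

Lemma fsD f g : fs f -> fs g -> fs (fun k => f k + g k).
Proof.
move=> [N1 H1] [N2 H2]; exists (maxn N1 N2) => k H.
have [/eqP f0|/H1] := boolP (f k == 0); last by lia.
have [/eqP g0|/H2] := boolP (g k == 0); last by lia.
by move: H; rewrite f0 g0 addr0 eqxx.
Qed.

Lemma fsMl f g : fs f -> fs (fun k => f k * g k).
Proof.
move=> [N H]; exists N => k; have [/eqP ->|/H //] := boolP (f k == 0).
by rewrite mul0r eqxx.
Qed.

Lemma fsMr f g : fs g -> fs (fun k => f k * g k).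
Proof.
move=> [N H]; exists N => k; have [/eqP ->|/H //] := boolP (g k == 0).
by rewrite mulr0 eqxx.
Qed.

Lemma fs_shift f (m : int) : fs f -> fs (fun k => f (k + m)).
Proof. move=> [N H]; exists (N + absz m)%N => k /H; lia. Qed.

Lemma fs_ext {f g} : fs f -> (forall k, f k = g k) -> fs g.
Proof. by move=> [N H] e; exists N => k; rewrite -e; apply: H. Qed.

Lemma fsB f g : fs f -> fs g -> fs (fun k => f k - g k).
Proof.
move=> F G; apply: (fs_ext (fsD F (fsMr (fun _ => -1) G))) => k.
by rewrite mulN1r.
Qed.

Lemma fs_sum (I : Type) (r : seq I) (F : I -> int -> R) :
  (forall j, fs (F j)) -> fs (fun k => \sum_(j <- r) F j k).
Proof.
move=> HF; elim: r => [|j r IH].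
  by apply: (fs_ext fs0) => k; rewrite big_nil.
apply: (fs_ext (fsD (HF j) IH)) => k; by rewrite big_cons.
Qed.

Lemma zsumD f g : fs f -> fs g -> zsum (fun k => f k + g k) = zsum f + zsum g.
Proof.
move=> F G; have /fs_win [N3 H3] := fsD F G.
move: F G => /fs_win [N1 H1] /fs_win [N2 H2].
rewrite (H1 (maxn N1 (maxn N2 N3))) ?leq_maxl //.
rewrite (H2 (maxn N1 (maxn N2 N3))); last by lia.
rewrite (H3 (maxn N1 (maxn N2 N3))); last by lia.
by rewrite big_split.
Qed.

Lemma zsumZ (c : R) f : zsum (fun k => c * f k) = c * zsum f.
Proof. by rewrite /zsum mulr_fsumr. Qed.

Lemma zsum_ext f g : (forall k, f k = g k) -> zsum f = zsum g.
Proof. by move=> e; congr zsum; apply: funext. Qed.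

Lemma zsumB f g : fs f -> fs g -> zsum (fun k => f k - g k) = zsum f - zsum g.
Proof.
move=> F G; rewrite zsumD //; last by apply: (fs_ext (fsMr (fun _ => -1) G)) => k; rewrite mulN1r.
by rewrite -mulN1r -zsumZ; congr (_ + _); apply: zsum_ext => k; rewrite mulN1r.
Qed.

Lemma zsum_shift f (m : int) : fs f -> zsum (fun k => f (k + m)) = zsum f.
Proof.
move=> [N H].
rewrite (zsum_win (lo := - N%:Z - m) (L := N.*2)); last by move=> k /H; lia.
rewrite (zsum_win (lo := - N%:Z) (L := N.*2)); last by move=> k /H; lia.
by apply: eq_bigr => i _; congr f; ring.
Qed.

Lemma zsum_ge0 f : (forall k, 0 <= f k) -> 0 <= zsum f.
Proof. by move=> H; apply: fsumr_ge0 => k _. Qed.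

Lemma zsum_le f g : fs f -> fs g -> (forall k, f k <= g k) -> zsum f <= zsum g.
Proof.
move=> F G H; rewrite -subr_ge0 -zsumB //; apply: zsum_ge0 => k.
by rewrite subr_ge0.
Qed.

Lemma zsum_sum (I : Type) (r : seq I) (F : I -> int -> R) :
  (forall j, fs (F j)) -> zsum (fun k => \sum_(j <- r) F j k) = \sum_(j <- r) zsum (F j).
Proof.
move=> HF; elim: r => [|j r IH].
  rewrite big_nil /zsum; apply: fsbig1 => k _; by rewrite big_nil.
rewrite big_cons (zsum_ext (g := fun k => F j k + \sum_(j <- r) F j k)); last by move=> k; rewrite big_cons.
by rewrite zsumD ?IH //; apply: fs_sum.
Qed.

Section U.
Variable u : int -> R.
Hypothesis fu : fs u.

Definition P (m : int) := zsum (fun k => u k * u (k + m)).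
Definition Q (m : int) := zsum (fun k => (u (k + m) - u k) ^+ 2).

Lemma fsP m : fs (fun k => u k * u (k + m)).
Proof. exact: fsMl. Qed.

Lemma Q_eq m : Q m = 2 * P 0 - 2 * P m.
Proof.
rewrite /Q (zsum_ext (g := fun k => (u (k + m) * u (k + m) + u k * u k) - 2 * (u k * u (k + m)))); last first.
  by move=> k; ring.
rewrite zsumB; last 2 first.
- by apply: fsD; apply: fsMl => //; apply: fs_shift.
- by apply: fsMr; apply: fsP.
rewrite zsumD; last 2 first.
- by apply: fsMl; apply: fs_shift.
- by apply: fsMl.
rewrite zsumZ (zsum_shift (f := fun k => u k * u k)); last exact: fsMl.
rewrite /P (zsum_ext (f := fun k => u k * u (k + 0)) (g := fun k => u k * u k)); last first.
  by move=> k; rewrite addr0.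
by rewrite -/(P m); ring.
Qed.

Lemma E_eq (m : int) :
  zsum (fun k => (u (k + 1) - u k) * (u (k + m) - u (k - m + 1))) = Q m - Q (m - 1).
Proof.
rewrite !Q_eq.
rewrite (zsum_ext (g := fun k => (u (k + 1) * u (k + m) - u (k + 1) * u (k - m + 1))
   - (u k * u (k + m) - u k * u (k - m + 1)))); last by move=> k; ring.
have f1 : fs (fun k => u (k + 1) * u (k + m)) by apply: fsMl; apply: fs_shift.
have f2 : fs (fun k => u (k + 1) * u (k - m + 1)) by apply: fsMl; apply: fs_shift.
have f3 : fs (fun k => u k * u (k - m + 1)) by apply: fsMl.
rewrite zsumB; last 2 first.
- exact: fsB.
- exact: fsB (fsP _) f3.
rewrite !zsumB //; try exact: fsP.
have h1 : zsum (fun k => u (k + 1) * u (k + m)) = P (m - 1).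
  rewrite /P -(zsum_shift 1 (fsP (m - 1))); apply: zsum_ext => k /=.
  by congr (u _ * u _); ring.
have h2 : zsum (fun k => u (k + 1) * u (k - m + 1)) = P m.
  rewrite /P -(zsum_shift (1 - m) (fsP m)); apply: zsum_ext => k /=.
  by rewrite mulrC; congr (u _ * u _); ring.
have h3 : zsum (fun k => u k * u (k - m + 1)) = P (m - 1).
  rewrite /P -(zsum_shift (1 - m) (fsP (m - 1))); apply: zsum_ext => k /=.
  by rewrite mulrC; congr (u _ * u _); ring.
rewrite h1 h2 h3 -/(P m); ring.
Qed.
End U.
End Z.

Lemma abel (R : realType) (rho q : nat -> R) n : (1 <= n)%N -> q 0%N = 0 ->
  \sum_(1 <= j < n.+1) rho j * (q j - q j.-1) =
  rho n * q n + \sum_(1 <= j < n) (rho j - rho j.+1) * q j.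
Proof.
move=> + q0; elim: n => [//|n IH] _.
case: n IH => [_|n IH].
  by rewrite big_nat1 big_geq // q0 subr0 addr0.
rewrite big_nat_recr //= IH // [in RHS]big_nat_recr //=; ring.
Qed.

Lemma abel_lb (R : realType) (M : nat) (rho q : nat -> R) :
  (1 <= M)%N ->
  (forall i j : nat, (1 <= i)%N -> (i < j)%N -> (j <= M)%N -> rho j < rho i) ->
  0 < rho M -> q 0%N = 0 -> (forall j, 0 <= q j) ->
  (if M == 1%N then rho 1%N else rho 1%N - rho 2%N) * q 1%N <=
  \sum_(1 <= j < M.+1) rho j * (q j - q j.-1).
Proof.
move=> M1 dec rM q0 qge; rewrite abel //.
case: eqP => [e|ne].
  by subst M; rewrite big_geq // addr0.
have M2 : (2 <= M)%N by lia.
rewrite big_ltn; last by lia.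
have h1 : 0 <= rho M * q M by rewrite mulr_ge0 // ltW.
have h2 : 0 <= \sum_(2 <= j < M) (rho j - rho j.+1) * q j.
  rewrite big_nat sumr_ge0 // => j /andP [j1 j2].
  by rewrite mulr_ge0 // subr_ge0 ltW // dec //; lia.
lra.
Qed.

Unset Implicit Arguments.
Theorem theorem4p1 (R : realType) (M : nat) (rho : nat -> R) (a b : R) :
  (1 <= M)%N ->
  (forall i j : nat, (1 <= i)%N -> (i < j)%N -> (j <= M)%N -> rho j < rho i) ->
  0 < rho M ->
  a < b ->
  exists Lambda : R, 0 < Lambda /\
    forall (eps : R) (u : int -> R),
      0 < eps -> eps < (2 * M%:R)^-1 ->
      (forall k : int, ~ (a < eps * k%:~R < b) -> u k = 0) ->
      Lambda * Deps eps u <= Feps M rho eps u.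
Proof.
move=> M1 dec rM ab.
set L0 := if M == 1%N then rho 1%N else rho 1%N - rho 2%N.
have L0pos : 0 < L0.
  rewrite /L0; case: eqP => [e|ne]; first by rewrite -e.
  by rewrite subr_gt0 dec //; lia.
exists (L0 ^+ 2); split; first by rewrite exprn_gt0.
move=> eps u e0 _ hu.
have fu : fs u.
  pose C := (`|a| + `|b|) / eps.
  have C0 : 0 <= C by rewrite divr_ge0 // ?addr_ge0 // ltW.
  exists (Num.Def.archi_bound C) => k nz.
  have h : a < eps * k%:~R < b.
    case: (boolP (a < eps * k%:~R < b)) => // h.
    by move: nz; rewrite hu ?eqxx //; apply/negP.
  have hk : (`|k|%N)%:R < C.
    rewrite natr_absz intr_norm /C ltr_pdivlMr // -[X in _ * X]gtr0_norm // -normrM mulrC.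
    rewrite ltr_norml; move/andP: h => [h1 h2].
    have := ler_norm a; have := ler_norm (-a); have := ler_norm b; have := ler_norm (-b).
    rewrite !normrN; lra.
  by rewrite -(ltr_nat R); apply: lt_trans hk (archi_boundP C0).
set S := fun k : int => \sum_(1 <= j < M.+1) (u (k + j%:Z) - u k) * rho j
                    - \sum_(1 <= j < M.+1) (u (k - j%:Z + 1) - u k) * rho j.
set d := fun k : int => u (k + 1) - u k.
have hF : Feps M rho eps u = eps^-1 * zsum (fun k => S k ^+ 2).
  rewrite /Feps -zsumZ; apply: zsum_ext => k; rewrite /S.
  by field; rewrite lt0r_neq0.
have hD : Deps eps u = eps^-1 * Q u 1.
  rewrite /Deps -zsumZ; apply: zsum_ext => k.
  by field; rewrite lt0r_neq0.
rewrite hF hD mulrA (mulrC _ eps^-1) -mulrA ler_pM2l ?invr_gt0 //.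
have fS : fs S.
  apply: fsB; apply: fs_sum => j; apply: fsMl; apply: fsB => //; first exact: fs_shift.
  by apply: (fs_ext (fs_shift (1 - j%:Z) fu)) => k; congr u; ring.
have fd : fs d by apply: fsB => //; exact: fs_shift.
have key : L0 * Q u 1 <= zsum (fun k => d k * S k).
  have -> : zsum (fun k => d k * S k) = \sum_(1 <= j < M.+1) rho j * (Q u j%:Z - Q u (j%:Z - 1)).
    rewrite (zsum_ext (g := fun k => \sum_(1 <= j < M.+1) rho j * (d k * (u (k + j%:Z) - u (k - j%:Z + 1))))); last first.
      move=> k; rewrite /S -sumrB mulr_sumr; apply: eq_bigr => j _; ring.
    rewrite zsum_sum; last first.
      move=> j; apply: fsMr; apply: fsMl; exact: fd.
    by apply: eq_bigr => j _; rewrite zsumZ E_eq.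
  have q0 : (fun j : nat => Q u j%:Z) 0%N = 0 by rewrite /= (Q_eq fu) subrr.
  have qge : forall j : nat, 0 <= (fun j : nat => Q u j%:Z) j.
    by move=> j; apply: zsum_ge0 => k; apply: sqr_ge0.
  have := abel_lb M1 dec rM q0 qge; rewrite -/L0 => H; apply: (le_trans H).
  rewrite le_eqVlt; apply/orP; left; apply/eqP; apply: eq_big_nat => j /andP [j1 _].
  by case: j j1 => [//|j _] /=; congr (_ * (_ - Q u _)); lia.
have cs : 2 * zsum (fun k => d k * S k) <= L0 * Q u 1 + L0^-1 * zsum (fun k => S k ^+ 2).
  rewrite /Q -!zsumZ -zsumD; last 2 first.
  - by apply: fsMr; apply: fsMl.
  - by apply: fsMr; apply: fsMl.
  apply: zsum_le.
  - by apply: fsMr; apply: fsMl.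
  - by apply: fsD; apply: fsMr; apply: fsMl.
  move=> k; rewrite -subr_ge0.
  have -> : L0 * (u (k + 1) - u k) ^+ 2 + L0^-1 * S k ^+ 2 - 2 * (d k * S k)
    = L0^-1 * (L0 * d k - S k) ^+ 2 by rewrite /d; field; rewrite lt0r_neq0.
  by rewrite mulr_ge0 ?sqr_ge0 // invr_ge0 ltW.
have h : L0 * Q u 1 <= L0^-1 * zsum (fun k => S k ^+ 2) by lra.
rewrite -(ler_pM2l L0pos) !mulrA mulfV ?lt0r_neq0 // mul1r in h.
by rewrite expr2.
Qed.
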